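(* Let $n,k,d$ be positive integers with $k\le d<n$, let $\alpha>0$, and for each integer $M\ge 0$ set $n_M=n+M$, $k_M=k+M$, $d_M=d+M$, $\gamma_{MSR}=\frac{d_M\alpha}{d_M-k_M+1}$ and $\gamma_{MBR}=\alpha$. Let $s\in[0,1]$ be fixed. Then $$ \lim_{M\to\infty}\frac{C^{\text{exact}}_{n_M,k_M,d_M}\big(\alpha,\,s\gamma_{MSR}+(1-s)\gamma_{MBR}\big)}{C_{k_M,d_M}\big(\alpha,\,s\gamma_{MSR}+(1-s)\gamma_{MBR}\big)}=1. $$
   Context: A distributed storage system (regenerating code) with parameters $(n,k,d)$, node size $\alpha$ and total repair bandwidth $\gamma$ stores a file on $n$ nodes, each node storing an amount $\alpha$ of information, such that the file can be reconstructed from the contents of any $k$ nodes, and any lost node can be repaired by contacting any $d$ of the remaining nodes, each of which transmits an amount $\beta=\gamma/d$ to the new node. The code has exact repair if the repaired node stores exactly the same content as the lost node, and functional repair if the repaired node need only preserve the reconstruction and repair properties. $C^{\text{exact}}_{n,k,d}(\alpha,\gamma)$ denotes the capacity (maximum storable file size) of exact-repair codes with these parameters. Amounts of information are treated as arbitrarily divisible, so capacities are positively homogeneous. $C_{k,d}(\alpha,\gamma)$ denotes the capacity of functional-repair codes, which equals $\sum_{j=0}^{k-1}\min\{\alpha,\frac{d-j}{d}\gamma\}$. *)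

(* Defs.v *)
From Stdlib Require Import Reals List Arith.
From Coquelicot Require Import Coquelicot.
Import ListNotations.
Open Scope R_scope.

Definition node_set (n : nat) (H : list nat) : Prop :=
  NoDup H /\ (forall j, In j H -> (j < n)%nat).

(* Exact-repair regenerating code with parameters (n,k,d), block length l,
   storing a file taking B values (files are 0..B-1), each node storing at
   most 2^(l*alpha) symbols' worth (i.e. its content lies in a set of size
   A <= 2^(l alpha)), each helper transmitting a message from a set of size
   Bt <= 2^(l beta), beta = gamma/d.  Amounts are per unit of block length,
   measured in bits. *)
Definition exact_repair_code (n k d : nat) (alpha gamma : R) (l B : nat) : Prop :=
  exists (A Bt : nat) (f : nat -> nat -> nat),
    INR A <= Rpower 2 (INR l * alpha) /\
    INR Bt <= Rpower 2 (INR l * (gamma / INR d)) /\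
    (forall i m, (i < n)%nat -> (m < B)%nat -> (f i m < A)%nat) /\
    (forall K, node_set n K -> length K = k ->
       exists D : list nat -> nat,
         forall m, (m < B)%nat -> D (map (fun j => f j m) K) = m) /\
    (forall i H, (i < n)%nat -> node_set n H -> length H = d -> ~ In i H ->
       exists (g : nat -> nat -> nat) (r : list nat -> nat),
         (forall j x, (g j x < Bt)%nat) /\
         forall m, (m < B)%nat ->
           r (map (fun j => g j (f j m)) H) = f i m).

Definition achievable_rate (n k d : nat) (alpha gamma : R) (x : R) : Prop :=
  exists l B, (0 < l)%nat /\ (0 < B)%nat /\
    exact_repair_code n k d alpha gamma l B /\
    x = ln (INR B) / ln 2 / INR l.

Definition C_exact (n k d : nat) (alpha gamma : R) : R :=
  real (Lub_Rbar (achievable_rate n k d alpha gamma)).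

Definition C_func (k d : nat) (alpha gamma : R) : R :=
  fold_right Rplus 0
    (map (fun j => Rmin alpha ((INR d - INR j) / INR d * gamma)) (seq 0 k)).

(* Main.v *)
Require Import Defs.
From Stdlib Require Import Reals List Arith Lia Lra.
From Coquelicot Require Import Coquelicot.
Open Scope R_scope.

Definition comb_code (n k d B A Bt : nat) : Prop :=
  exists f : nat -> nat -> nat,
    (forall i m, (i < n)%nat -> (m < B)%nat -> (f i m < A)%nat) /\
    (forall K, node_set n K -> length K = k ->
       exists D : list nat -> nat,
         forall m, (m < B)%nat -> D (map (fun j => f j m) K) = m) /\
    (forall i H, (i < n)%nat -> node_set n H -> length H = d -> ~ In i H ->
       exists (g : nat -> nat -> nat) (r : list nat -> nat),
         (forall j x, (g j x < Bt)%nat) /\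
         forall m, (m < B)%nat ->
           r (map (fun j => g j (f j m)) H) = f i m).

Fixpoint sumdk (d k : nat) : nat :=
  match k with 0 => 0%nat | S k' => (sumdk d k' + (d - k'))%nat end.

Fixpoint prodf (c : nat -> nat) (k : nat) : nat :=
  match k with 0 => 1%nat | S k' => (prodf c k' * c k')%nat end.

Module MC.
From mathcomp Require Import all_boot all_algebra zify.
Import GRing.Theory.
Local Close Scope R_scope.
Local Open Scope nat_scope.

Lemma ltP' m n : (m < n)%coq_nat <-> (m < n). Proof. split; move/ltP; done. Qed.

Lemma In_mem (x : nat) (l : list nat) : List.In x l <-> x \in l.
Proof. elim: l => [|y l IH] //=; rewrite inE; split.
- by case=> [->|/IH ->]; rewrite ?eqxx ?orbT.
- by case/orP=> [/eqP->|/IH]; [left|right].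
Qed.

Lemma map_List (A B : Type) (f : A -> B) l : List.map f l = map f l.
Proof. by elim: l => //= x l ->. Qed.

Lemma length_size (A : Type) (l : list A) : length l = size l.
Proof. by elim: l => //= x l ->. Qed.

Lemma NoDup_uniq (l : list nat) : NoDup l -> uniq l.
Proof. elim: l => //= x l IH /NoDup_cons_iff [nx nd]; rewrite IH // andbT.
by apply/negP => /In_mem. Qed.

Lemma map_eq_in (A : Type) (f g : A -> nat) l :
  List.map f l = List.map g l -> forall j, List.In j l -> f j = g j.
Proof. elim: l => //= x l IH [e1 e2] j [<-|h] //; exact: IH. Qed.
Arguments map_eq_in {A f g l}.

Lemma find_dec (X : eqType) (Y : Type) (B : nat) (P : nat -> X) (Q : nat -> Y) :
  (forall m m', m < B -> m' < B -> P m = P m' -> Q m = Q m') ->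
  exists r : X -> Y, forall m, m < B -> r (P m) = Q m.
Proof.
move=> h; exists (fun y => Q (nth 0 (iota 0 B) (find (fun m => P m == y) (iota 0 B)))).
move=> m mB.
have hs : has (fun m' => P m' == P m) (iota 0 B).
  by apply/hasP; exists m; rewrite ?mem_iota //.
have := nth_find 0 hs; move: hs; rewrite has_find size_iota => hs.
rewrite nth_iota // add0n => /eqP e; exact: h.
Qed.

Lemma transfer (Msg C G : finType) (m0 : Msg) (n k d Bt : nat) (enc : nat -> Msg -> C) :
  (forall K, node_set n K -> length K = k -> forall x y : Msg,
      (forall j, List.In j K -> enc j x = enc j y) -> x = y) ->
  (forall i H, (i < n)%coq_nat -> node_set n H -> length H = d -> ~ List.In i H ->
     exists rep : nat -> C -> G, (forall j, #|[set rep j c | c in C]| <= Bt) /\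
       forall x y : Msg, (forall j, List.In j H -> rep j (enc j x) = rep j (enc j y)) ->
         enc i x = enc i y) ->
  comb_code n k d #|Msg| #|C| Bt.
Proof.
move=> hrec hrep.
pose mdec m := nth m0 (enum Msg) m.
pose cenc (c : C) := index c (enum C).
have cencK : forall c c', cenc c = cenc c' -> c = c'.
  move=> c c' e; rewrite -(nth_index c (mem_enum C c)) -(nth_index c (mem_enum C c')).
  by rewrite /cenc in e; rewrite e.
have mdecI : forall m m', m < #|Msg| -> m' < #|Msg| -> mdec m = mdec m' -> m = m'.
  move=> m m' hm hm' e; apply/eqP; rewrite -(nth_uniq m0 _ _ (enum_uniq Msg)) -?cardT //.
  by rewrite /mdec in e; rewrite e.
exists (fun i m => cenc (enc i (mdec m))); split; [|split].
- by move=> i m _ _; apply/ltP; rewrite /cenc cardT index_mem mem_enum.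
- move=> K hK hl.
  have [|r hr] := @find_dec _ _ #|Msg| (fun m => List.map (fun j => cenc (enc j (mdec m))) K) id;
    last first.
    by exists r => m /ltP; apply: hr.
    move=> m m' hm hm' e; apply: mdecI => //; apply: (hrec K hK hl) => j hj.
    by apply: cencK; exact: (map_eq_in e j hj).
- move=> i H hi hH hl hni.
  have [rep [hc hd]] := hrep i H hi hH hl hni.
  pose c0 := enc 0 m0.
  pose cdec x := nth c0 (enum C) x.
  pose g j x := index (rep j (cdec x)) (enum [set rep j c | c in C]).
  have gI : forall j c c', g j (cenc c) = g j (cenc c') -> rep j c = rep j c'.
    move=> j c c'; rewrite /g /cdec /cenc !nth_index ?mem_enum // => e.
    have h1 : rep j c \in enum [set rep j c | c in C] by rewrite mem_enum imset_f.
    have h2 : rep j c' \in enum [set rep j c | c in C] by rewrite mem_enum imset_f.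
    by rewrite -(nth_index (rep j c) h1) -(nth_index (rep j c) h2) e.
  have [|r hr] := @find_dec _ _ #|Msg| (fun m => List.map (fun j => g j (cenc (enc j (mdec m)))) H)
                  (fun m => cenc (enc i (mdec m))); last first.
    exists g, r; split; last by move=> m /ltP; apply: hr.
    move=> j x; apply/ltP; apply: leq_trans (hc j); rewrite cardE index_mem mem_enum.
    exact: imset_f.
    move=> m m' hm hm' e; congr cenc; apply: hd => j hj; apply: gI.
    exact: (map_eq_in e j hj).
Qed.


Lemma uniq_NoDup (l : list nat) : uniq l -> NoDup l.
Proof. elim: l => /= [_|x l IH /andP [nx u]]; first by constructor.
constructor; last exact: IH. by move/In_mem; apply/negP. Qed.

Lemma seq_iota a b : List.seq a b = iota a b.
Proof. by elim: b a => //= b IH a; rewrite IH. Qed.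

Fixpoint allL (L N : nat) : seq (seq nat) :=
  if L is L'.+1 then [seq x :: s | x <- iota 0 N, s <- allL L' N] else [:: [::]].

Lemma size_allL L N : size (allL L N) = N ^ L.
Proof. by elim: L => //= L IH; rewrite size_allpairs size_iota IH expnS. Qed.

Lemma mem_allL L N s : size s = L -> all (fun x => x < N) s -> s \in allL L N.
Proof.
elim: L s => [|L IH] [|x s] //= [hs] /andP [hx ha].
apply/allpairsP; exists (x, s) => /=; split => //; first by rewrite mem_iota.
exact: IH.
Qed.

Lemma sub_bound (T T2 : eqType) (s : seq nat) (F : nat -> T) (Y : seq (seq nat))
   (Zs : seq T2) (G : seq nat -> T2 -> T) :
  (forall m, m \in s -> exists2 y, y \in Y & exists2 z, z \in Zs & F m = G y z) ->
  size (undup (map F s)) <= size Y * size Zs.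
Proof.
move=> h; rewrite -(size_allpairs G).
apply: uniq_leq_size; first exact: undup_uniq.
move=> x; rewrite mem_undup => /mapP [m hm ->].
have [y hy [z hz ->]] := h m hm.
by apply/allpairsP; exists (y, z).
Qed.

Lemma minE a b : Nat.min a b = minn a b.
Proof. case: (leqP a b) => h.
  by rewrite PeanoNat.Nat.min_l //; apply/leP.
by rewrite PeanoNat.Nat.min_r //; apply/leP; exact: ltnW. Qed.

Lemma powE a b : Nat.pow a b = a ^ b.
Proof. by elim: b => //= b IH; rewrite expnS IH mulnE. Qed.

Lemma cutset_comb n k d B A Bt (f : nat -> nat -> nat) :
  (k <= d)%coq_nat -> (d < n)%coq_nat ->
  (forall i m, (i < n)%coq_nat -> (m < B)%coq_nat -> (f i m < A)%coq_nat) ->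
  (forall K, node_set n K -> length K = k ->
     exists D : list nat -> nat, forall m, (m < B)%coq_nat -> D (List.map (fun j => f j m) K) = m) ->
  (forall i H, (i < n)%coq_nat -> node_set n H -> length H = d -> ~ List.In i H ->
     exists (g : nat -> nat -> nat) (r : list nat -> nat),
       (forall j x, (g j x < Bt)%coq_nat) /\
       forall m, (m < B)%coq_nat -> r (List.map (fun j => g j (f j m)) H) = f i m) ->
  (B <= prodf (fun j => Nat.min A (Nat.pow Bt (d - j))) k)%coq_nat.
Proof.
move=> /leP kd /ltP dn hf hrec hrep; apply/leP.
pose Phi j m := [seq f i m | i <- iota 0 j].
pose img j := undup [seq Phi j m | m <- iota 0 B].
have step : forall j, j < k -> size (img j.+1) <= size (img j) * minn A (Bt ^ (d - j)).
  move=> j jk.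
  have PhiS : forall m, Phi j.+1 m = rcons (Phi j m) (f j m).
    by move=> m; rewrite /Phi -addn1 iotaD map_cat cats1.
  have b1 : size (img j.+1) <= size (img j) * A.
    rewrite /img -(size_iota 0 A). apply: (@sub_bound (seq nat) nat (iota 0 B) (Phi j.+1) _ (iota 0 A) (@rcons nat)) => m hm.
    exists (Phi j m); first by rewrite mem_undup map_f.
    exists (f j m); last exact: PhiS.
    rewrite mem_iota add0n /=; apply/ltP; apply: hf.
      lia.
    by apply/ltP; rewrite mem_iota in hm.
  pose Hj := List.seq 0 j ++ List.seq j.+1 (d - j).
  have [g [r [hg hr]]] : exists (g : nat -> nat -> nat) (r : list nat -> nat),
       (forall j x, (g j x < Bt)%coq_nat) /\
       forall m, (m < B)%coq_nat -> r (List.map (fun j => g j (f j m)) Hj) = f j m.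
    apply: hrep.
    - lia.
    - split.
        apply: uniq_NoDup; rewrite /Hj !seq_iota cat_uniq !iota_uniq /= andbT.
        apply/hasP => -[x]; rewrite !mem_iota => /andP [h1 _] /andP [_ h2]; lia.
      move=> x /In_mem; rewrite /Hj !seq_iota mem_cat !mem_iota => /orP [/andP [_ h]| /andP [_ h]];
        lia.
    - rewrite /Hj List.length_app !List.length_seq; lia.
    - move/In_mem; rewrite /Hj !seq_iota mem_cat !mem_iota; lia.
  have b2 : size (img j.+1) <= size (img j) * Bt ^ (d - j).
    rewrite /img -(size_allL (d - j) Bt).
    apply: (@sub_bound (seq nat) (seq nat) (iota 0 B) (Phi j.+1) _ (allL (d - j) Bt) (fun y z => rcons y (r (List.app (List.map (fun i => g i (nth 0 y i)) (List.seq 0 j)) z)))).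
    move=> m hm; exists (Phi j m); first by rewrite mem_undup map_f.
    exists (List.map (fun i => g i (f i m)) (List.seq j.+1 (d - j))).
      apply: mem_allL; first by rewrite -length_size List.length_map List.length_seq.
      by apply/allP => x; rewrite map_List => /mapP [y _ ->]; apply/ltP.
    rewrite PhiS; congr rcons; rewrite -hr; last by apply/ltP; rewrite mem_iota in hm.
    congr r; rewrite /Hj List.map_app; congr List.app; rewrite !map_List seq_iota.
    apply/eq_in_map => i; rewrite mem_iota add0n => /andP [_ hi].
    by rewrite /Phi (nth_map 0) ?size_iota // nth_iota.
  by case: (leqP A (Bt ^ (d - j))) => hAB.
have bound : forall j, j <= k -> size (img j) <= prodf (fun j => Nat.min A (Nat.pow Bt (d - j))) j.
  elim => [_|j IH jk] /=.
    rewrite /img /Phi /=; apply: (@leq_trans (size [:: [::]])) => //.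
    apply: uniq_leq_size; first exact: undup_uniq.
    by move=> x; rewrite mem_undup => /mapP [m _ ->]; rewrite inE.
  apply: leq_trans (step j jk) _; rewrite minE powE -mulnE.
  by apply: leq_mul; [apply: IH; apply: ltnW|].
apply: leq_trans (bound k (leqnn k)).
have hK : node_set n (List.seq 0 k).
  split; first exact: List.seq_NoDup.
  move=> x /List.in_seq [_ h]; lia.
have [D hD] := hrec _ hK (List.length_seq _ _).
have e : forall m, m < B -> D (Phi k m) = m.
  by move=> m hm; have := hD m (elimT ltP hm); rewrite map_List seq_iota.
rewrite /img undup_id; first by rewrite size_map size_iota.
rewrite map_inj_in_uniq ?iota_uniq // => m m' hm hm' he.
by rewrite -(e m) -1?(e m') ?he //; [rewrite mem_iota in hm'|rewrite mem_iota in hm].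
Qed.


Lemma sum_geq a d : \sum_(0 <= b < d) (if a <= b then 1 else 0) = d - a.
Proof.
elim: d => [|d IH]; first by rewrite big_geq.
rewrite big_nat_recr //= IH; case: (leqP a d) => h; lia.
Qed.

Lemma sum_dk d k : \sum_(0 <= a < k) (d - a) = sumdk d k.
Proof. by elim: k => [|k IH]; [rewrite big_geq | rewrite big_nat_recr //= IH]. Qed.

Lemma card_pairs k d : k <= d ->
  #|[pred ab : 'I_d * 'I_d | (ab.1 <= ab.2) && (ab.1 < k)]| = sumdk d k.
Proof.
move=> kd; rewrite -sum1_card big_mkcond /=.
rewrite -(pair_bigA _ (fun a b : 'I_d => if (a <= b) && (a < k) then 1 else 0)) /=.
transitivity (\sum_(a < d) (if a < k then d - a else 0)).
  apply: eq_bigr => a _; case: (ltnP a k) => ha.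
    rewrite -sum_geq big_mkord; apply: eq_bigr => b _; by rewrite andbT.
  by apply: big1 => b _; rewrite andbF.
rewrite -(big_mkord xpredT (fun a => if a < k then d - a else 0)) (@big_cat_nat _ _ _ k 0 d _ _ (leq0n k) kd) /=.
rewrite [X in _ + X](@eq_big_nat _ _ _ k d _ (fun=> 0)); last first.
  by move=> a /andP [ha _]; rewrite ltnNge ha.
rewrite sum_nat_const_nat muln0 addn0.
rewrite -sum_dk; apply: eq_big_nat => a /andP [_ ha]; by rewrite ha.
Qed.

Lemma card_Pidx_msg (F : finType) k d : k <= d ->
  #|{ffun {ab : 'I_d * 'I_d | (ab.1 <= ab.2) && (ab.1 < k)} -> F}| = #|F| ^ sumdk d k.
Proof. by move=> kd; rewrite card_ffun card_sig card_pairs. Qed.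

Lemma cnt (n' : nat) (L : seq nat) (S : {pred 'I_n'.+1}) :
  uniq L -> all (fun j => j < n'.+1) L ->
  #|S| - (n'.+1 - size L) <= size [seq j <- L | (inord j : 'I_n'.+1) \in S].
Proof.
move=> uL aL.
pose LL := [seq (inord j : 'I_n'.+1) | j <- L].
have injL : {in L &, injective (fun j => (inord j : 'I_n'.+1))}.
  move=> i j hi hj e; have := congr1 (@nat_of_ord _) e.
  by rewrite !inordK //; [move/allP: aL => /(_ j hj)|move/allP: aL => /(_ i hi)].
have uLL : uniq LL by rewrite map_inj_in_uniq.
have szL : #|[pred y | y \in LL]| = size L.
  by rewrite (card_uniqP uLL) size_map.
have h1 := cardID [pred y | y \in LL] S.
have h2 := cardC [pred y | y \in LL].
rewrite card_ord szL in h2.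
have h3 : #|[predD S & [pred y | y \in LL]]| <= #|[predC [pred y | y \in LL]]|.
  by apply: subset_leq_card; apply/subsetP => y; rewrite !inE => /andP [].
have h4 : #|[predI S & [pred y | y \in LL]]| = size [seq j <- L | (inord j : 'I_n'.+1) \in S].
  rewrite -(size_map (fun j => (inord j : 'I_n'.+1))) -filter_map.
  rewrite -(card_uniqP (filter_uniq _ uLL)); apply: eq_card => y.
  by rewrite !inE mem_filter.
have h5 : #|[predC [pred y | y \in LL]]| = n'.+1 - size L by move: h2; move: #|[predC _]| => C; lia.
rewrite -h1 h4 leq_subLR addnC leq_add2r -h5; exact: h3.
Qed.

Lemma card_eqpair (q n' : nat) (i0 j0 : 'I_n'.+1) : i0 != j0 -> 0 < q ->
  #|[pred h : {ffun 'I_n'.+1 -> 'I_q} | h j0 == h i0]| <= q ^ n'.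
Proof.
move=> nij q0.
pose A := {h : {ffun 'I_n'.+1 -> 'I_q} | h j0 == h i0}.
pose f (p : A * 'I_q) : {ffun 'I_n'.+1 -> 'I_q} := [ffun y => if y == j0 then p.2 else val p.1 y].
have fi : injective f.
  move=> [[h hh] c] [[h' hh'] c'] e.
  have ec : c = c' by have := congr1 (fun g : {ffun _ -> _} => g j0) e; rewrite /f !ffunE eqxx.
  have ey : forall y, y != j0 -> h y = h' y.
    move=> y ny; have := congr1 (fun g : {ffun _ -> _} => g y) e; rewrite /f !ffunE /=.
    by rewrite (negbTE ny).
  subst c'; congr pair; apply: val_inj => /=; apply/ffunP => y.
  case: (eqVneq y j0) => [->|ny]; last exact: ey.
  rewrite (eqP hh) (eqP hh'); exact: (ey _ nij).
have := @leq_card _ _ f fi; rewrite card_prod card_sig !card_ffun !card_ord expnS => h.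
by rewrite -(leq_pmul2r q0) [X in _ <= X]mulnC.
Qed.

Lemma sum_lt t N : t <= N -> \sum_(u < N) (if u < t then 1 else 0) = t.
Proof.
move=> tN; rewrite -(big_mkord xpredT (fun u => if u < t then 1 else 0)) (@big_cat_nat _ _ _ t 0 N _ _ (leq0n t) tN) /=.
rewrite [X in _ + X](@eq_big_nat _ _ _ t N _ (fun=> 0)); last first.
  by move=> a /andP [ha _]; rewrite ltnNge ha.
rewrite sum_nat_const_nat muln0 addn0.
rewrite (@eq_big_nat _ _ _ 0 t _ (fun=> 1)); last by move=> a /andP [_ ->].
by rewrite sum_nat_const_nat muln1 subn0.
Qed.

Lemma sum_classes (n' q : nat) (h : {ffun 'I_n'.+1 -> 'I_q}) :
  \sum_(c < q) #|[pred y | h y == c]| = n'.+1.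
Proof.
transitivity (\sum_(c < q) \sum_(y : 'I_n'.+1) (if h y == c then 1 else 0)).
  by apply: eq_bigr => c _; rewrite -sum1_card big_mkcond.
rewrite exchange_big /= -[RHS]card_ord -sum1_card; apply: eq_bigr => y _.
by rewrite -big_mkcond /= (eq_bigl (fun c => c == h y)) ?big_pred1_eq // => c; rewrite eq_sym.
Qed.

Definition ttf (n' q a : nat) (h : {ffun 'I_n'.+1 -> 'I_q}) (c : 'I_q) :=
  #|[pred y | h y == c]| - a.
Arguments ttf {n' q}.

Lemma card_idx (n' q a : nat) :
  n'.+1 * q ^ n'.+1 <=
  #|[pred z : ({ffun 'I_n'.+1 -> 'I_q} * 'I_q) * 'I_n'.+1 | z.2 < ttf a z.1.1 z.1.2]|
   + q ^ n'.+1 * (q * a).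
Proof.
pose tt := @ttf n' q a.
have e1 : #|[pred z : ({ffun 'I_n'.+1 -> 'I_q} * 'I_q) * 'I_n'.+1 | z.2 < tt z.1.1 z.1.2]|
   = \sum_(h : {ffun 'I_n'.+1 -> 'I_q}) \sum_(c < q) tt h c.
  rewrite -sum1_card big_mkcond /=.
  rewrite -(pair_bigA _ (fun (hc : {ffun 'I_n'.+1 -> 'I_q} * 'I_q) (u : 'I_n'.+1) =>
                            if u < tt hc.1 hc.2 then 1 else 0)) /=.
  rewrite -(pair_bigA _ (fun h c => \sum_(u < n'.+1) if u < tt h c then 1 else 0)) /=.
  apply: eq_bigr => h _; apply: eq_bigr => c _; apply: sum_lt.
  rewrite /tt /ttf; apply: leq_trans (leq_subr _ _) _; apply: leq_trans (max_card _) _; by rewrite card_ord.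
have e2 : q ^ n'.+1 = #|{ffun 'I_n'.+1 -> 'I_q}| by rewrite card_ffun !card_ord.
rewrite e1 e2 -sum1_card big_distrr big_distrl /= -big_split /= leq_sum // => h _.
rewrite muln1 mul1n -{1}(@sum_classes n' q h).
have e3 : q * a = \sum_(c < q) a by rewrite sum_nat_const card_ord.
rewrite e3 -big_split leq_sum // => c _.
change (#|[pred y | h y == c]| <= tt h c + a); by rewrite /tt /ttf addnC -leq_subLR.
Qed.

Local Open Scope ring_scope.
#[local] Set Implicit Arguments.
#[local] Unset Strict Implicit.
Definition extu (F : nzRingType) (N : nat) (u : 'I_N -> F) (i : nat) : F :=
  if insub i is Some a then u a else 0%R.

Lemma extu_val (F : nzRingType) N (u : 'I_N -> F) (a : 'I_N) : extu u a = u a.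
Proof. by rewrite /extu valK. Qed.

Lemma poly_van (F : idomainType) (N T : nat) (u : 'I_N -> F) (xs : seq F) :
  (forall a : 'I_N, (T <= a)%N -> u a = 0) -> uniq xs -> (T <= size xs)%N ->
  (forall x, x \in xs -> \sum_(a < N) u a * x ^+ a = 0) -> forall a, u a = 0%R.
Proof.
move=> hT hu hs hx a.
pose p : {poly F} := \poly_(i < N) extu u i.
have cp : forall i : 'I_N, p`_i = u i by move=> i; rewrite coef_poly ltn_ord extu_val.
case: (eqVneq p 0) => [p0|pn0]; first by rewrite -cp p0 coef0.
have sz : (size p <= T)%N.
  apply/leq_sizeP => j hj; rewrite coef_poly; case: ltnP => // jN.
  by rewrite /extu insubT /=; apply: hT.
have rt : all (root p) xs.
  apply/allP => x /hx h; rewrite /root horner_poly -[X in _ == X]h.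
  by apply/eqP; apply: eq_bigr => i _; rewrite extu_val.
have h := max_poly_roots pn0 rt hu; exfalso.
by move: (leq_trans h sz); rewrite ltnNge hs.
Qed.


Lemma mbr_alg (F : idomainType) (k d : nat) (c : 'I_d -> 'I_d -> F) (xs : seq F) :
  (forall a b, c a b = c b a) -> (forall a b : 'I_d, (k <= a)%N -> (k <= b)%N -> c a b = 0) ->
  uniq xs -> (k <= size xs)%N ->
  (forall x, x \in xs -> forall b, \sum_(a < d) c a b * x ^+ a = 0) -> forall a b, c a b = 0.
Proof.
move=> hsym hz hu hs hsum.
have h1 : forall b : 'I_d, (k <= b)%N -> forall a, c a b = 0.
  move=> b hb; apply: (@poly_van F d k (fun a => c a b) xs) => //.
    by move=> a ha; exact: hz.
  by move=> x hx; exact: hsum.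
move=> a b; case: (leqP k b) => hb; first exact: h1.
apply: (@poly_van F d k (fun a => c a b) xs) => //; last by move=> x hx; exact: hsum.
by move=> a' ha'; rewrite hsym; exact: h1.
Qed.

Definition Pidx (k d : nat) := {ab : 'I_d * 'I_d | (ab.1 <= ab.2)%N && (ab.1 < k)%N}.

Definition coef (F : nzRingType) k d (m : {ffun Pidx k d -> F}) (a b : 'I_d) : F :=
  if @insub _ _ (Pidx k d) (a, b) is Some z then m z
  else if @insub _ _ (Pidx k d) (b, a) is Some z then m z else 0.

Lemma coef_sym (F : nzRingType) k d (m : {ffun Pidx k d -> F}) a b : coef m a b = coef m b a.
Proof.
rewrite /coef; case: (@insubP _ _ (Pidx k d) (a, b)) => [z hz ez|nz];
  case: (@insubP _ _ (Pidx k d) (b, a)) => [z' hz' ez'|nz'] //.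
have eab : a = b.
  move: hz hz' => /= /andP [h1 _] /andP [h2 _]; apply: val_inj; apply/eqP.
  by rewrite eqn_leq h1 h2.
subst b; congr (m _); apply: val_inj; by rewrite ez ez'.
Qed.

Lemma coef_zero (F : nzRingType) k d (m : {ffun Pidx k d -> F}) (a b : 'I_d) :
  (k <= a)%N -> (k <= b)%N -> coef m a b = 0.
Proof.
move=> ha hb; rewrite /coef insubF ?insubF //= ltnNge ?ha ?hb andbF //.
Qed.

Lemma coef_val (F : nzRingType) k d (m : {ffun Pidx k d -> F}) (z : Pidx k d) :
  coef m (val z).1 (val z).2 = m z.
Proof. by rewrite /coef -surjective_pairing valK. Qed.

Lemma natr_inj_list (F : Type) (x : nat -> F) (n : nat) (L : seq nat) :
  (forall i j, (i < n)%N -> (j < n)%N -> x i = x j -> i = j) ->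
  (forall j, List.In j L -> (j < n)%coq_nat) ->
  {in L &, injective x}.
Proof.
move=> hx hL i j /In_mem hi /In_mem hj; apply: hx; apply/ltP; [exact: hL|exact: hL].
Qed.

Lemma mbr_code (F : finFieldType) (x : nat -> F) (n k d : nat) :
  (forall i j, (i < n)%N -> (j < n)%N -> x i = x j -> i = j) ->
  (k <= d)%N -> (d < n)%N ->
  comb_code n k d #|{ffun Pidx k d -> F}| #|{ffun 'I_d -> F}| #|F|.
Proof.
move=> hx kd dn.
pose enc (j : nat) (m : {ffun Pidx k d -> F}) : {ffun 'I_d -> F} :=
  [ffun b : 'I_d => \sum_(a < d) coef m a b * x j ^+ a].
apply: (@transfer _ _ _ [ffun => 0] n k d #|F| enc).
- move=> K [hnd hK] hl m m' he.
  pose c a b := coef m a b - coef m' a b.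
  have hc : forall a b, c a b = 0.
    apply: (@mbr_alg F k d c [seq x j | j <- K]).
    + by move=> a b; rewrite /c coef_sym (coef_sym m').
    + by move=> a b ha hb; rewrite /c !coef_zero // subrr.
    + by rewrite map_inj_in_uniq ?NoDup_uniq //; apply: natr_inj_list hx hK.
    + by rewrite size_map -length_size hl.
    move=> y /mapP [j /In_mem hj ->] b.
    have := congr1 (fun v : {ffun 'I_d -> F} => v b) (he j hj); rewrite /enc !ffunE => e.
    rewrite /c; under eq_bigr do rewrite mulrBl.
    by rewrite sumrB e subrr.
  apply/ffunP => z; rewrite -!coef_val; apply/eqP; rewrite -subr_eq0; apply/eqP.
  exact: hc.
- move=> i H hi [hnd hH] hl hni.
  exists (fun (j : nat) (v : {ffun 'I_d -> F}) => \sum_(b < d) v b * x i ^+ b).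
  split; first by move=> j; apply: max_card.
  move=> m m' he; apply/ffunP => b; rewrite /enc !ffunE.
  pose c a b := coef m a b - coef m' a b.
  pose u a := \sum_(b < d) c a b * x i ^+ b.
  have hu : forall a, u a = 0.
    apply: (@poly_van F d d u [seq x j | j <- H]).
    + by move=> a; rewrite leqNgt ltn_ord.
    + by rewrite map_inj_in_uniq ?NoDup_uniq //; apply: natr_inj_list hx hH.
    + by rewrite size_map -length_size hl.
    move=> y /mapP [j /In_mem hj ->].
    have e := he j hj; rewrite /enc in e.
    transitivity (\sum_(b < d) (\sum_(a < d) c a b * x j ^+ a) * x i ^+ b).
      under eq_bigr do rewrite /u big_distrl /=.
      rewrite exchange_big /=; apply: eq_bigr => b' _; rewrite big_distrl.
      by apply: eq_bigr => a _ /=; rewrite mulrAC.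
    rewrite -[RHS](subrr (\sum_(b < d) [ffun b => \sum_(a < d) coef m' a b * x j ^+ a] b * x i ^+ b)).
    rewrite -{1}e -sumrB; apply: eq_bigr => b' _; rewrite !ffunE -mulrBl -sumrB.
    by congr (_ * _); apply: eq_bigr => a _; rewrite mulrBl.
  apply/eqP; rewrite -subr_eq0 -sumrB; apply/eqP; rewrite -[RHS](hu b) /u.
  by apply: eq_bigr => a _; rewrite -mulrBl /c (coef_sym m) (coef_sym m').
Qed.


Definition Idx (n' q a : nat) :=
  {z : ({ffun 'I_n'.+1 -> 'I_q} * 'I_q) * 'I_n'.+1 | (z.2 < ttf a z.1.1 z.1.2)%N}.

Definition cf (F : nzRingType) n' q a (m : {ffun Idx n' q a -> F}) (h : {ffun 'I_n'.+1 -> 'I_q})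
   (c : 'I_q) (u : 'I_n'.+1) : F :=
  if @insub _ _ (Idx n' q a) (h, c, u) is Some z then m z else 0.

Lemma cf_val (F : nzRingType) n' q a (m : {ffun Idx n' q a -> F}) (z : Idx n' q a) :
  cf m (val z).1.1 (val z).1.2 (val z).2 = m z.
Proof. by rewrite /cf -!surjective_pairing valK. Qed.

Lemma cf_zero (F : nzRingType) n' q a (m : {ffun Idx n' q a -> F}) h c (u : 'I_n'.+1) :
  (ttf a h c <= u)%N -> cf m h c u = 0.
Proof. by move=> hu; rewrite /cf insubF //= ltnNge hu. Qed.

Lemma code_det (F : finFieldType) (x : nat -> F) n' q a (m m' : {ffun Idx n' q a -> F})
   (h : {ffun 'I_n'.+1 -> 'I_q}) (c : 'I_q) (L : seq nat) :
  (forall i j, (i < n'.+1)%N -> (j < n'.+1)%N -> x i = x j -> i = j) ->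
  uniq L -> all (fun j => j < n'.+1)%N L ->
  (ttf a h c <= #|[pred y | h y == c]| - (n'.+1 - size L))%N ->
  (forall j, j \in L -> h (inord j) == c ->
     \sum_(u < n'.+1) cf m h c u * x j ^+ u = \sum_(u < n'.+1) cf m' h c u * x j ^+ u) ->
  forall u, cf m h c u = cf m' h c u.
Proof.
move=> hx uL aL hsz hv u; apply/eqP; rewrite -subr_eq0; apply/eqP; move: u.
apply: (@poly_van F n'.+1 (ttf a h c) (fun u => cf m h c u - cf m' h c u)
          [seq x j | j <- L & h (inord j) == c]).
- by move=> u hu; rewrite !cf_zero // subrr.
- rewrite map_inj_in_uniq ?filter_uniq // => i j; rewrite !mem_filter => /andP [_ hi] /andP [_ hj].
  apply: hx; [exact: (allP aL)|exact: (allP aL)].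
- rewrite size_map; apply: leq_trans hsz _.
  have := @cnt n' L [pred y | h y == c] uL aL.
  by rewrite (@eq_filter _ _ (fun j => h (inord j) == c)).
- move=> y /mapP [j]; rewrite mem_filter => /andP [hc hj] ->.
  under eq_bigr do rewrite mulrBl.
  by rewrite sumrB hv // subrr.
Qed.

Lemma list_ok n (L : seq nat) : node_set n L -> uniq L /\ all (fun j => j < n)%N L.
Proof.
move=> [nd hL]; split; first exact: NoDup_uniq.
by apply/allP => j /In_mem hj; apply/ltP; exact: hL.
Qed.

Lemma part_code (F : finFieldType) (x : nat -> F) (n' k d q : nat) :
  (forall i j, (i < n'.+1)%N -> (j < n'.+1)%N -> x i = x j -> i = j) ->
  (k <= d)%N -> (d < n'.+1)%N -> (0 < q)%N ->
  comb_code n'.+1 k d #|{ffun Idx n' q (n'.+1 - k) -> F}|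
     #|{ffun {ffun 'I_n'.+1 -> 'I_q} -> F}| (#|F| ^ (q ^ n')).
Proof.
move=> hx kd dn q0.
set a := (n'.+1 - k)%N.
pose enc (j : nat) (m : {ffun Idx n' q a -> F}) : {ffun {ffun 'I_n'.+1 -> 'I_q} -> F} :=
  [ffun h => \sum_(u < n'.+1) cf m h (h (inord j)) u * x j ^+ u].
apply: (@transfer _ _ _ [ffun => 0] n'.+1 k d _ enc).
- move=> K hK hl m m' he; have [uK aK] := list_ok hK.
  apply/ffunP => z; rewrite -!cf_val.
  apply: (@code_det F x n' q a m m' _ _ K hx uK aK).
    by rewrite -length_size hl.
  move=> j /In_mem hj /eqP hc.
  have := congr1 (fun v : {ffun _ -> F} => v (val z).1.1) (he j hj); rewrite /enc !ffunE.
  by rewrite hc.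
- move=> i H hi hH hl hni; have [uH aH] := list_ok hH.
  exists (fun (j : nat) (v : {ffun {ffun 'I_n'.+1 -> 'I_q} -> F}) =>
    if (inord j : 'I_n'.+1) == inord i then [ffun => 0]
    else [ffun h : {ffun 'I_n'.+1 -> 'I_q} => if h (inord j) == h (inord i) then v h else 0]).
  split.
  + move=> j; case: eqP => hji.
      apply: leq_trans (_ : 1 <= _)%N; last by rewrite expn_gt0; apply/orP; left; apply/card_gt0P; exists 0.
      rewrite -(cards1 ([ffun => 0] : {ffun {ffun 'I_n'.+1 -> 'I_q} -> F})).
      by apply: subset_leq_card; apply/subsetP => y /imsetP [v _ ->]; rewrite inE.
    pose D := [pred h : {ffun 'I_n'.+1 -> 'I_q} | h (inord j) == h (inord i)].
    apply: (@leq_trans #|pffun_on (0 : F) D predT|).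
      apply: subset_leq_card; apply/subsetP => y /imsetP [v _ ->].
      apply/pffun_onP; split; last by move=> w _.
      apply/subsetP => h; rewrite !inE ffunE; by case: ifP => // _; rewrite eqxx.
    rewrite card_pffun_on; apply: leq_pexp2l.
      by apply/card_gt0P; exists 0.
    apply: card_eqpair => //; apply/eqP => e; apply: hji; by rewrite e.
  + move=> m m' he; apply/ffunP => h; rewrite /enc !ffunE.
    have e := @code_det F x n' q a m m' h (h (inord i)) H hx uH aH.
    rewrite (eq_bigr (fun u => cf m' h (h (inord i)) u * x i ^+ u)) //.
    move=> u _; congr (_ * _); apply: e.
      rewrite -length_size hl /ttf; apply: leq_sub2l; lia.
    move=> j hj' hc; have hj := iffRL (In_mem _ _) hj'.
    have hjN : (j < n'.+1)%N := allP aH j hj'.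
    have hiN : (i < n'.+1)%N by apply/ltP.
    have hji : (inord j : 'I_n'.+1) != inord i.
      apply/eqP => e'; have := congr1 (@nat_of_ord _) e'.
      rewrite !inordK // => ej; apply: hni; by rewrite -ej.
    have := congr1 (fun v : {ffun _ -> F} => v h) (he j hj); rewrite /= (negbTE hji) !ffunE hc.
    by rewrite (eqP hc).
Qed.


Lemma Fp_inj (p n : nat) : prime p -> (n <= p)%N ->
  forall i j, (i < n)%N -> (j < n)%N -> (i%:R : 'F_p) = j%:R -> i = j.
Proof.
move=> pr np i j hi hj e; have := congr1 (@nat_of_ord _) e; rewrite !val_Fp_nat // !modn_small //.
  exact: leq_trans hj np.
exact: leq_trans hi np.
Qed.

Lemma mbr_exists n k d : (k <= d)%coq_nat -> (d < n)%coq_nat ->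
  forall m, exists p, (m < p)%coq_nat /\ (2 <= p)%coq_nat /\
     comb_code n k d (Nat.pow p (sumdk d k)) (Nat.pow p d) p.
Proof.
move=> /leP kd /ltP dn m.
have [p hp pr] := prime_above (maxn m n).
exists p; split; first by apply/ltP; apply: leq_ltn_trans hp; exact: leq_maxl.
split; first by apply/leP; exact: prime_gt1.
have := @mbr_code 'F_p (fun j => j%:R) n k d.
rewrite card_Pidx_msg // card_ffun !card_ord (Fp_cast pr) !powE; apply => //.
apply: Fp_inj => //; apply: ltnW; apply: leq_ltn_trans hp; exact: leq_maxr.
Qed.

Lemma part_exists n' k d q : (k <= d)%coq_nat -> (d < n'.+1)%coq_nat -> (0 < q)%coq_nat ->
  exists Z, (n'.+1 * Nat.pow q n'.+1 <= Z + Nat.pow q n'.+1 * (q * (n'.+1 - k)))%coq_nat /\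
  forall m, exists p, (m < p)%coq_nat /\ (2 <= p)%coq_nat /\
     comb_code n'.+1 k d (Nat.pow p Z) (Nat.pow p (Nat.pow q n'.+1)) (Nat.pow p (Nat.pow q n')).
Proof.
move=> /leP kd /ltP dn /ltP q0.
exists #|{: Idx n' q (n'.+1 - k)}|.
split.
  apply/leP; rewrite !powE /Idx card_sig; exact: card_idx.
move=> m.
have [p hp pr] := prime_above (maxn m n'.+1).
exists p.
split; first by apply/ltP; apply: leq_ltn_trans hp; exact: leq_maxl.
split; first by apply/leP; exact: prime_gt1.
have := @part_code 'F_p (fun j => j%:R) n' k d q.
rewrite !card_ffun !card_ord (Fp_cast pr) !powE; apply => //.
apply: Fp_inj => //; apply: ltnW; apply: leq_ltn_trans hp; exact: leq_maxr.
Qed.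

End MC.


Lemma exact_of_comb n k d alpha gamma l B A Bt :
  comb_code n k d B A Bt -> INR A <= Rpower 2 (INR l * alpha) ->
  INR Bt <= Rpower 2 (INR l * (gamma / INR d)) -> exact_repair_code n k d alpha gamma l B.
Proof. intros [f [h1 [h2 h3]]] hA hB. exists A, Bt, f. tauto. Qed.

Lemma fold_plus_shift (l : list R) c : fold_right Rplus c l = fold_right Rplus 0 l + c.
Proof. induction l as [|x l IH]; simpl; [lra| rewrite IH; lra]. Qed.

Lemma C_func_S k d alpha gamma :
  C_func (S k) d alpha gamma = C_func k d alpha gamma + Rmin alpha ((INR d - INR k) / INR d * gamma).
Proof.
  unfold C_func. rewrite List.seq_S, map_app, fold_right_app. simpl.
  rewrite fold_plus_shift. lra.
Qed.

Lemma C_func_0 d alpha gamma : C_func 0 d alpha gamma = 0.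
Proof. reflexivity. Qed.

Lemma C_func_le k d alpha gamma : C_func k d alpha gamma <= INR k * alpha.
Proof.
  induction k as [|k IH]; [rewrite C_func_0; simpl; lra|].
  rewrite C_func_S, S_INR. pose proof (Rmin_l alpha ((INR d - INR k) / INR d * gamma)). lra.
Qed.

Lemma C_func_mbr k d alpha : (k <= d)%nat -> (0 < d)%nat -> 0 < alpha ->
  C_func k d alpha alpha = alpha * INR (sumdk d k) / INR d.
Proof.
  intros kd d0 ha. assert (hd : 0 < INR d) by (apply lt_0_INR; lia).
  induction k as [|k IH].
  - rewrite C_func_0. simpl. field. lra.
  - rewrite C_func_S, IH by lia. simpl sumdk. rewrite plus_INR, minus_INR by lia.
    rewrite Rmin_right.
    + field. lra.
    + assert (0 <= INR k) by apply pos_INR.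
      apply Rle_trans with ((INR d - 0) / INR d * alpha).
      * apply Rmult_le_compat_r; [lra|]. unfold Rdiv. apply Rmult_le_compat_r.
        { left; apply Rinv_0_lt_compat; lra. } lra.
      * right. field. lra.
Qed.

Lemma ln_prodf_bound k (c : nat -> nat) (X : nat -> R) :
  (forall j, (j < k)%nat -> (0 < c j)%nat -> ln (INR (c j)) <= X j) ->
  (0 < prodf c k)%nat ->
  ln (INR (prodf c k)) <= fold_right Rplus 0 (map X (List.seq 0 k)).
Proof.
  induction k as [|k IH]; intros hc hp.
  - simpl. rewrite ln_1. lra.
  - simpl in hp. rewrite List.seq_S, map_app, fold_right_app. simpl.
    rewrite fold_plus_shift.
    assert (h1 : (0 < prodf c k)%nat) by (destruct (prodf c k); lia).
    assert (h2 : (0 < c k)%nat) by (destruct (c k); lia).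
    simpl. rewrite mult_INR, ln_mult by (apply lt_0_INR; lia).
    pose proof (IH (fun j hj => hc j ltac:(lia)) h1).
    pose proof (hc k ltac:(lia) h2). lra.
Qed.

Lemma rate_le n k d alpha gamma x :
  (k <= d)%nat -> (d < n)%nat -> achievable_rate n k d alpha gamma x -> x <= C_func k d alpha gamma.
Proof.
  intros kd dn [l [B [hl [hB [[A [Bt [f [hA [hBt [hf [hrec hrep]]]]]]] ->]]]]].
  pose proof (MC.cutset_comb n k d B A Bt f kd dn hf hrec hrep) as hc.
  set (c := fun j => Nat.min A (Nat.pow Bt (d - j))) in hc.
  assert (hl2 : 0 < ln 2) by (apply ln_lt_2 || (rewrite <- ln_1; apply ln_increasing; lra)).
  assert (hlR : 0 < INR l) by (apply lt_0_INR; lia).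
  assert (key : ln (INR (prodf c k)) <=
     fold_right Rplus 0 (map (fun j => INR l * ln 2 * Rmin alpha ((INR d - INR j) / INR d * gamma)) (List.seq 0 k))).
  { apply ln_prodf_bound; [|eapply PeanoNat.Nat.lt_le_trans; [exact hB|exact hc]].
    intros j hj hcj. apply Rmult_le_reg_l with (/ (INR l * ln 2)).
    { apply Rinv_0_lt_compat; nra. }
    rewrite <- Rmult_assoc, Rinv_l, Rmult_1_l by nra.
    apply Rmin_glb.
    - apply Rmult_le_reg_l with (INR l * ln 2); [nra|].
      rewrite <- Rmult_assoc, Rinv_r, Rmult_1_l by nra.
      apply Rle_trans with (ln (INR A)).
      + apply ln_le; [apply lt_0_INR; lia|]. apply le_INR. unfold c. lia.
      + apply Rle_trans with (ln (Rpower 2 (INR l * alpha))).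
        * apply ln_le; [apply lt_0_INR; unfold c in hcj; lia| exact hA].
        * unfold Rpower. rewrite ln_exp. lra.
    - apply Rmult_le_reg_l with (INR l * ln 2); [nra|].
      rewrite <- Rmult_assoc, Rinv_r, Rmult_1_l by nra.
      assert (hBt0 : (0 < Bt)%nat).
      { unfold c in hcj. destruct Bt; [|lia]. rewrite PeanoNat.Nat.pow_0_l in hcj by lia. lia. }
      apply Rle_trans with (ln (INR (Nat.pow Bt (d - j)))).
      + apply ln_le; [apply lt_0_INR; lia|]. apply le_INR. unfold c. lia.
      + rewrite pow_INR, ln_pow by (apply lt_0_INR; lia).
        rewrite minus_INR by lia.
        assert (hb : ln (INR Bt) <= INR l * (gamma / INR d) * ln 2).
        { apply Rle_trans with (ln (Rpower 2 (INR l * (gamma / INR d)))).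
          - apply ln_le; [apply lt_0_INR; lia| exact hBt].
          - unfold Rpower. rewrite ln_exp. lra. }
        assert (0 <= INR d - INR j).
        { assert (INR j <= INR d) by (apply le_INR; lia). lra. }
        apply Rle_trans with ((INR d - INR j) * (INR l * (gamma / INR d) * ln 2)).
        * apply Rmult_le_compat_l; lra.
        * right. unfold Rdiv. ring. }
  assert (hB1 : ln (INR B) <= ln (INR (prodf c k))).
  { apply ln_le; [apply lt_0_INR; lia|]. apply le_INR. exact hc. }
  assert (e : fold_right Rplus 0 (map (fun j => INR l * ln 2 * Rmin alpha ((INR d - INR j) / INR d * gamma)) (List.seq 0 k))
              = INR l * ln 2 * C_func k d alpha gamma).
  { unfold C_func. generalize (List.seq 0 k). intros s. induction s as [|y s IH]; simpl; [ring| rewrite IH; ring]. }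
  rewrite e in key.
  apply Rmult_le_reg_l with (INR l * ln 2); [nra|].
  replace (INR l * ln 2 * (ln (INR B) / ln 2 / INR l)) with (ln (INR B)) by (field; lra).
  lra.
Qed.

Lemma Lub_ge (E : R -> Prop) Cb x : (forall y, E y -> y <= Cb) -> E x -> x <= real (Lub_Rbar E).
Proof.
  intros hb hx. destruct (Lub_Rbar_correct E) as [ub lub].
  destruct (Lub_Rbar E) as [r| |] eqn:e.
  - exact (ub x hx).
  - exfalso. assert (h : Rbar_le p_infty (Finite Cb)) by (apply lub; intros y hy; exact (hb y hy)).
    exact h.
  - exfalso. exact (ub x hx).
Qed.

Lemma Lub_le (E : R -> Prop) Cb x : (forall y, E y -> y <= Cb) -> E x -> real (Lub_Rbar E) <= Cb.
Proof.
  intros hb hx. destruct (Lub_Rbar_correct E) as [ub lub].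
  destruct (Lub_Rbar E) as [r| |] eqn:e.
  - assert (h : Rbar_le (Finite r) (Finite Cb)) by (apply lub; intros y hy; exact (hb y hy)).
    exact h.
  - exfalso. assert (h : Rbar_le p_infty (Finite Cb)) by (apply lub; intros y hy; exact (hb y hy)).
    exact h.
  - exfalso. exact (ub x hx).
Qed.

Lemma INR_pow_ln p e : (0 < p)%nat -> INR (Nat.pow p e) = exp (INR e * ln (INR p)).
Proof.
  intros hp. rewrite pow_INR. rewrite <- ln_pow by (apply lt_0_INR; lia).
  rewrite exp_ln; [reflexivity|]. apply pow_lt. apply lt_0_INR; lia.
Qed.

Lemma exp_le_le x y : x <= y -> exp x <= exp y.
Proof. intros h. destruct h as [h|h]; [left; apply exp_increasing; exact h| right; rewrite h; reflexivity]. Qed.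

Lemma lower_gen n k d alpha gamma (Zs Xs Ys : nat) Cb :
  0 < alpha -> (0 < Xs)%nat -> INR Ys * alpha <= INR Xs * (gamma / INR d) ->
  (forall m, exists p, (m < p)%nat /\ (2 <= p)%nat /\
       comb_code n k d (Nat.pow p Zs) (Nat.pow p Xs) (Nat.pow p Ys)) ->
  (forall x, achievable_rate n k d alpha gamma x -> x <= Cb) ->
  INR Zs * alpha / INR Xs <= C_exact n k d alpha gamma.
Proof.
  intros ha hX hload hex hub.
  assert (hl2 : 0 < ln 2) by (rewrite <- ln_1; apply ln_increasing; lra).
  assert (hXR : 0 < INR Xs) by (apply lt_0_INR; lia).
  assert (hZ : 0 <= INR Zs) by apply pos_INR.
  assert (hY : 0 <= INR Ys) by apply pos_INR.
  assert (hg : 0 <= gamma / INR d).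
  { apply Rmult_le_reg_l with (INR Xs); [lra|]. rewrite Rmult_0_r. nra. }
  assert (rate : forall p, (2 <= p)%nat -> comb_code n k d (Nat.pow p Zs) (Nat.pow p Xs) (Nat.pow p Ys) ->
     INR Zs * alpha * ln (INR p) / (INR Xs * ln (INR p) + alpha * ln 2) <= C_exact n k d alpha gamma).
  { intros p hp hc.
    assert (hLp : 0 < ln (INR p)).
    { rewrite <- ln_1. apply ln_increasing; [lra|]. apply lt_1_INR; lia. }
    set (r := INR Xs * ln (INR p) / (alpha * ln 2)).
    assert (hr : 0 < r).
    { unfold r. apply Rdiv_lt_0_compat; nra. }
    destruct (nfloor_ex r ltac:(lra)) as [l0 [hl1 hl2']].
    set (l := S l0).
    assert (hlr : r < INR l) by (unfold l; rewrite S_INR; lra).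
    assert (hlr2 : INR l <= r + 1) by (unfold l; rewrite S_INR; lra).
    assert (hlpos : 0 < INR l) by lra.
    apply Rle_trans with (ln (INR (Nat.pow p Zs)) / ln 2 / INR l).
    - rewrite pow_INR, ln_pow by (apply lt_0_INR; lia).
      apply Rle_trans with (INR Zs * ln (INR p) / ln 2 / (r + 1)).
      + right. unfold r. field. repeat split; try lra; nra.
      + unfold Rdiv. rewrite !Rmult_assoc. apply Rmult_le_compat_l; [lra|].
        apply Rmult_le_compat_l; [lra|]. apply Rmult_le_compat_l.
        { left; apply Rinv_0_lt_compat; lra. }
        apply Rinv_le_contravar; lra.
    - apply Lub_ge with Cb; [exact hub|].
      exists l, (Nat.pow p Zs). split; [unfold l; lia|]. split.
      { apply PeanoNat.Nat.neq_0_lt_0. apply PeanoNat.Nat.pow_nonzero. lia. }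
      split; [|reflexivity].
      apply exact_of_comb with (Nat.pow p Xs) (Nat.pow p Ys); [exact hc| |].
      + rewrite INR_pow_ln by lia. unfold Rpower. apply exp_le_le.
        assert (INR Xs * ln (INR p) = r * (alpha * ln 2)) by (unfold r; field; nra).
        assert (0 < alpha * ln 2) by nra. nra.
      + rewrite INR_pow_ln by lia. unfold Rpower. apply exp_le_le.
        assert (e1 : INR Xs * ln (INR p) = r * (alpha * ln 2)) by (unfold r; field; nra).
        assert (h1 : INR Ys * ln (INR p) * alpha <= INR Xs * (gamma / INR d) * ln (INR p)) by nra.
        assert (h2 : INR Xs * (gamma / INR d) * ln (INR p) = r * alpha * ln 2 * (gamma / INR d)) by nra.
        assert (h3 : r * alpha * ln 2 * (gamma / INR d) <= INR l * alpha * ln 2 * (gamma / INR d)).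
        { apply Rmult_le_compat_r; [lra|]. apply Rmult_le_compat_r; [lra|]. nra. }
        assert (h4 : INR Ys * ln (INR p) * alpha <= INR l * (gamma / INR d) * ln 2 * alpha) by nra.
        apply Rmult_le_reg_r with alpha; [lra|]. lra. }
  set (v := INR Zs * alpha / INR Xs).
  set (Ce := C_exact n k d alpha gamma).
  destruct (Rle_or_lt v Ce) as [h|h]; [exact h|exfalso].
  set (c := alpha * ln 2).
  assert (hc : 0 < c) by (unfold c; nra).
  assert (hv : 0 < v).
  { destruct (Rle_lt_or_eq_dec 0 (INR Zs) hZ) as [hz|hz].
    - unfold v. apply Rdiv_lt_0_compat; nra.
    - exfalso. destruct (hex 2%nat) as [p [hp1 [hp2 hcp]]]. pose proof (rate p hp2 hcp) as hr0.
      rewrite <- hz in hr0. unfold v in h. rewrite <- hz in h.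
      assert (e0 : 0 * alpha * ln (INR p) / (INR Xs * ln (INR p) + alpha * ln 2) = 0) by (unfold Rdiv; ring).
      rewrite e0 in hr0.
      assert (e1 : 0 * alpha / INR Xs = 0) by (unfold Rdiv; ring).
      rewrite e1 in h. fold Ce in hr0. lra. }
  set (delta := v - Ce).
  assert (hd : 0 < delta) by (unfold delta; lra).
  set (bnd := v * c / (delta * INR Xs)).
  destruct (INR_unbounded (exp bnd)) as [m hm].
  destruct (hex m) as [p [hp1 [hp2 hcp]]].
  pose proof (rate p hp2 hcp) as hrp.
  assert (hLp : bnd < ln (INR p)).
  { rewrite <- (ln_exp bnd). apply ln_increasing; [apply exp_pos|].
    apply Rlt_trans with (INR m); [lra|]. apply lt_INR; lia. }
  assert (hbnd : 0 < bnd) by (unfold bnd; apply Rdiv_lt_0_compat; nra).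
  set (L := ln (INR p)) in *.
  assert (hden : 0 < INR Xs * L + c) by nra.
  assert (hx : INR Zs * alpha * L / (INR Xs * L + alpha * ln 2) = v * (INR Xs * L) / (INR Xs * L + c)).
  { assert (INR Xs * L + alpha * ln 2 <> 0) by (unfold c in hden; lra). unfold v, c. field. split; lra. }
  rewrite hx in hrp.
  assert (hgt : v - delta < v * (INR Xs * L) / (INR Xs * L + c)).
  { apply Rmult_lt_reg_r with (INR Xs * L + c); [lra|].
    unfold Rdiv. rewrite Rmult_assoc, Rinv_l, Rmult_1_r by lra.
    assert (v * c < delta * (INR Xs * L)).
    { assert (hb2 : bnd * (delta * INR Xs) = v * c) by (unfold bnd; field; nra).
      rewrite <- hb2. assert (0 < delta * INR Xs) by nra. nra. }
    nra. }
  unfold delta in hgt. fold Ce in hrp. lra.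
Qed.

Lemma Lub_le' (E : R -> Prop) Cb : (forall y, E y -> y <= Cb) -> 0 <= Cb -> real (Lub_Rbar E) <= Cb.
Proof.
  intros hb h0. destruct (Lub_Rbar_correct E) as [ub lub].
  destruct (Lub_Rbar E) as [r| |] eqn:e.
  - assert (h : Rbar_le (Finite r) (Finite Cb)) by (apply lub; intros y hy; exact (hb y hy)).
    exact h.
  - exfalso. assert (h : Rbar_le p_infty (Finite Cb)) by (apply lub; intros y hy; exact (hb y hy)).
    exact h.
  - simpl. exact h0.
Qed.

Lemma C_func_nonneg k d alpha gamma : (k <= d)%nat -> 0 < alpha -> 0 <= gamma ->
  0 <= C_func k d alpha gamma.
Proof.
  intros kd ha hg. induction k as [|k IH]; [rewrite C_func_0; lra|].
  rewrite C_func_S. assert (0 <= C_func k d alpha gamma) by (apply IH; lia).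
  assert (hj : INR k <= INR d) by (apply le_INR; lia).
  assert (hD : 0 <= / INR d).
  { destruct (Req_dec (INR d) 0) as [e|e]; [rewrite e, Rinv_0; lra|].
    left; apply Rinv_0_lt_compat. assert (0 <= INR d) by apply pos_INR. lra. }
  assert (0 <= (INR d - INR k) / INR d * gamma).
  { unfold Rdiv. apply Rmult_le_pos; [apply Rmult_le_pos; lra| lra]. }
  unfold Rmin; destruct (Rle_dec alpha _); lra.
Qed.

Lemma Cexact_le n k d alpha gamma : (k <= d)%nat -> (d < n)%nat -> 0 < alpha -> 0 <= gamma ->
  C_exact n k d alpha gamma <= C_func k d alpha gamma.
Proof.
  intros kd dn ha hg. unfold C_exact. apply Lub_le'.
  - intros y hy. exact (rate_le n k d alpha gamma y kd dn hy).
  - apply C_func_nonneg; assumption.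
Qed.

Lemma sumdk_pos d k : (1 <= k)%nat -> (k <= d)%nat -> (1 <= sumdk d k)%nat.
Proof.
  intros h1 h2. induction k as [|k IH]; [lia|]. simpl.
  destruct k as [|k]; [simpl; lia|]. assert (1 <= sumdk d (S k))%nat by (apply IH; lia). lia.
Qed.

Theorem theorem5p2 (n k d : nat) (alpha s : R) :
  (1 <= k)%nat -> (k <= d)%nat -> (d < n)%nat -> 0 < alpha ->
  0 <= s <= 1 ->
  is_lim_seq
    (fun M : nat =>
       let gamma_MSR := INR (d + M) * alpha / (INR (d + M) - INR (k + M) + 1) in
       let gamma_MBR := alpha in
       let g := s * gamma_MSR + (1 - s) * gamma_MBR in
       C_exact (n + M) (k + M) (d + M) alpha g / C_func (k + M) (d + M) alpha g)
    1.
Proof.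
  intros hk kd dn ha hs.
  apply is_lim_seq_spec. intros eps. cbv zeta.
  assert (heps := cond_pos eps).
  assert (hc1 : forall M, INR (d + M) - INR (k + M) + 1 = INR d - INR k + 1).
  { intros M. rewrite !plus_INR. ring. }
  assert (hkd : INR k <= INR d) by (apply le_INR; lia).
  destruct (Req_dec s 0) as [s0|spos].
  -
    exists 0%nat. intros M _. subst s.
    set (K := (k + M)%nat). set (D := (d + M)%nat). set (N := (n + M)%nat).
    replace (0 * (INR D * alpha / (INR D - INR K + 1)) + (1 - 0) * alpha) with alpha by ring.
    assert (hKD : (K <= D)%nat) by (unfold K, D; lia).
    assert (hDN : (D < N)%nat) by (unfold D, N; lia).
    assert (hD0 : (0 < D)%nat) by (unfold D; lia).
    assert (hDR : 0 < INR D) by (apply lt_0_INR; lia).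
    assert (e : C_exact N K D alpha alpha = C_func K D alpha alpha).
    { apply Rle_antisym.
      - apply Cexact_le; auto; lra.
      - rewrite C_func_mbr by auto.
        replace (alpha * INR (sumdk D K) / INR D) with (INR (sumdk D K) * alpha / INR D) by (field; lra).
        apply lower_gen with (Ys := 1%nat) (Cb := C_func K D alpha alpha); auto.
        + simpl. right. field. lra.
        + intros m. destruct (MC.mbr_exists hKD hDN m) as [p [h1 [h2 h3]]].
          exists p. rewrite PeanoNat.Nat.pow_1_r. auto.
        + intros x hx. apply rate_le with N; auto. }
    rewrite e.
    assert (hpos : 0 < C_func K D alpha alpha).
    { rewrite C_func_mbr by auto. assert (1 <= INR (sumdk D K)).
      { replace 1 with (INR 1) by reflexivity. apply le_INR. apply sumdk_pos; unfold K; lia. }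
      apply Rdiv_lt_0_compat; nra. }
    rewrite Rdiv_diag by lra. rewrite Rminus_diag, Rabs_R0. exact heps.
  -
    assert (hs0 : 0 < s) by lra.
    set (c1 := INR d - INR k + 1).
    assert (hc1p : 0 < c1) by (unfold c1; lra).
    destruct (INR_unbounded (c1 / s)) as [q hq].
    assert (hq0 : (0 < q)%nat).
    { destruct q; [simpl in hq; assert (0 < c1 / s) by (apply Rdiv_lt_0_compat; lra); lra| lia]. }
    assert (hqs : c1 < INR q * s).
    { apply Rmult_lt_compat_r with (r := s) in hq; [|lra]. unfold Rdiv in hq.
      rewrite Rmult_assoc, Rinv_l, Rmult_1_r in hq by lra. lra. }
    set (a := (n - k)%nat).
    set (c0 := (INR q - 1) * INR a).
    assert (hq1 : 1 <= INR q) by (replace 1 with (INR 1) by reflexivity; apply le_INR; lia).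
    assert (hc0 : 0 <= c0) by (unfold c0; assert (0 <= INR a) by apply pos_INR; nra).
    destruct (INR_unbounded (c0 / eps + c0 + 1)) as [N0 hN0].
    assert (hc0e : 0 <= c0 / eps) by (apply Rdiv_le_0_compat; lra).
    exists N0. intros M hM.
    rewrite (hc1 M). fold c1.
    set (K := (k + M)%nat). set (D := (d + M)%nat). set (N := (n + M)%nat).
    set (g := s * (INR D * alpha / c1) + (1 - s) * alpha).
    assert (hKD : (K <= D)%nat) by (unfold K, D; lia).
    assert (hDN : (D < N)%nat) by (unfold D, N; lia).
    assert (hDR : 0 < INR D) by (apply lt_0_INR; unfold D; lia).
    assert (hKR : INR K > c0 / eps + c0 + 1).
    { apply Rlt_le_trans with (INR N0); [lra|]. apply le_INR. unfold K; lia. }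
    assert (hgpos : 0 < g).
    { unfold g. assert (0 < INR D * alpha / c1) by (apply Rdiv_lt_0_compat; nra). nra. }
    assert (hgD : s * alpha / c1 <= g / INR D).
    { unfold g. replace ((s * (INR D * alpha / c1) + (1 - s) * alpha) / INR D)
        with (s * alpha / c1 + (1 - s) * alpha / INR D) by (field; lra).
      assert (0 <= (1 - s) * alpha / INR D) by (apply Rdiv_le_0_compat; nra). lra. }
    set (n' := (N - 1)%nat).
    assert (eN : N = S n') by (unfold n', N; lia).
    destruct (@MC.part_exists n' K D q ltac:(lia) ltac:(lia) hq0) as [Z [hZ hex]].
    rewrite <- eN in hZ, hex.
    assert (hXs : (0 < Nat.pow q N)%nat).
    { apply PeanoNat.Nat.neq_0_lt_0. apply PeanoNat.Nat.pow_nonzero. lia. }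
    assert (hlow : INR Z * alpha / INR (Nat.pow q N) <= C_exact N K D alpha g).
    { apply lower_gen with (Ys := Nat.pow q n') (Cb := C_func K D alpha g); auto.
      - rewrite eN, pow_INR, pow_INR. simpl. rewrite <- pow_INR.
        set (Y := INR (Nat.pow q n')).
        assert (hY : 0 <= Y) by apply pos_INR.
        assert (alpha <= INR q * (g / INR D)).
        { apply Rle_trans with (INR q * (s * alpha / c1)).
          - apply Rmult_le_reg_r with c1; [lra|].
            replace (INR q * (s * alpha / c1) * c1) with (INR q * s * alpha) by (field; lra). nra.
          - apply Rmult_le_compat_l; lra. }
        nra.
      - intros x hx. apply rate_le with N; auto. }
    assert (hZR : INR N * INR (Nat.pow q N) <= INR Z + INR (Nat.pow q N) * (INR q * INR (N - K))).
    { rewrite <- !mult_INR, <- plus_INR. apply le_INR. exact hZ. }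
    assert (eNK : (N - K)%nat = a) by (unfold N, K, a; lia).
    rewrite eNK in hZR.
    assert (eNR : INR N = INR K + INR a) by (rewrite <- plus_INR; f_equal; unfold N, K, a; lia).
    assert (hXR : 0 < INR (Nat.pow q N)) by (apply lt_0_INR; lia).
    assert (hCe : (INR K - c0) * alpha <= C_exact N K D alpha g).
    { apply Rle_trans with (INR Z * alpha / INR (Nat.pow q N)); [|exact hlow].
      apply Rmult_le_reg_r with (INR (Nat.pow q N)); [lra|].
      replace (INR Z * alpha / INR (Nat.pow q N) * INR (Nat.pow q N)) with (INR Z * alpha) by (field; lra).
      unfold c0. rewrite eNR in hZR. nra. }
    assert (hCf : C_func K D alpha g <= INR K * alpha) by apply C_func_le.
    assert (hCeCf : C_exact N K D alpha g <= C_func K D alpha g) by (apply Cexact_le; auto; lra).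
    set (Ce := C_exact N K D alpha g) in *.
    set (Cf := C_func K D alpha g) in *.
    assert (hCep : 0 < Ce) by nra.
    assert (hCfp : 0 < Cf) by lra.
    assert (hr1 : Ce / Cf <= 1).
    { apply Rmult_le_reg_r with Cf; [lra|]. unfold Rdiv. rewrite Rmult_assoc, Rinv_l by lra. lra. }
    assert (hr2 : (INR K - c0) / INR K <= Ce / Cf).
    { assert (hKp : 0 < INR K) by lra.
      apply Rle_trans with (Ce / (INR K * alpha)).
      - apply Rmult_le_reg_r with (INR K * alpha); [nra|].
        replace ((INR K - c0) / INR K * (INR K * alpha)) with ((INR K - c0) * alpha) by (field; lra).
        replace (Ce / (INR K * alpha) * (INR K * alpha)) with Ce by (field; split; lra). lra.
      - unfold Rdiv. apply Rmult_le_compat_l; [lra|]. apply Rinv_le_contravar; lra. }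
    rewrite Rabs_left1 by lra.
    assert (hb : 1 - Ce / Cf <= c0 / INR K).
    { assert (e : (INR K - c0) / INR K = 1 - c0 / INR K) by (field; lra). lra. }
    apply Rle_lt_trans with (c0 / INR K); [lra|].
    apply Rmult_lt_reg_r with (INR K); [lra|].
    replace (c0 / INR K * INR K) with c0 by (field; lra).
    assert (c0 < eps * (c0 / eps + 1)).
    { replace (eps * (c0 / eps + 1)) with (c0 + eps) by (field; lra). lra. }
    assert (eps * (c0 / eps + 1) <= eps * INR K) by (apply Rmult_le_compat_l; lra). lra.
Qed.
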